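(* Let $p>11$ be prime, $q=p^h$, and let $\mathcal{F}: aX^n+bY^n=Z^n$ with $a,b\in\mathbb{F}_q$, $ab\neq0$, $n>3$, be an irreducible Fermat curve over $\mathbb{F}_q$. If $n=\frac{p^h-1}{3(p^r-1)}$ for a positive integer $r$ and $a^3,b^3\in\mathbb{F}_{p^r}$, then $N_q(\mathcal{F})=3n+n^2(p^r-2)$ if $p^r\equiv1\pmod3$, and $N_q(\mathcal{F})=3n+n^2p^r$ otherwise.
   Context: $N_q(\mathcal{F})$ denotes the number of $\mathbb{F}_q$-rational points of $\mathcal{F}$. *)

(* Defs.v *)
From HB Require Import structures.
From mathcomp Require Import all_boot all_order all_algebra all_field.
Set Implicit Arguments. Unset Strict Implicit. Unset Printing Implicit Defensive.
Import GRing.Theory.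
Local Open Scope ring_scope.

(* Canonical representative of a point of P^2(F): the first nonzero
   coordinate equals 1 (and the triple is nonzero). *)
Definition proj_normalized (F : fieldType) (t : F * F * F) : bool :=
  let: (x, y, z) := t in
  if x != 0 then x == 1 else if y != 0 then y == 1 else z == 1.

Definition fermat_Nq (F : finFieldType) (a b : F) (n : nat) : nat :=
  #|[set t : F * F * F | proj_normalized t &&
       (a * t.1.1 ^+ n + b * t.1.2 ^+ n == t.2 ^+ n)]|.

(* membership in the subfield F_{p^m} of F (fixed field of x |-> x^(p^m)) *)
Definition in_subfield (F : finFieldType) (p m : nat) (x : F) : bool :=
  x ^+ (p ^ m) == x.

(* Main.v *)
Require Import Defs.
From HB Require Import structures.
From mathcomp Require Import all_boot all_order all_algebra all_field.
From mathcomp Require Import ring zify.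
Set Implicit Arguments. Unset Strict Implicit. Unset Printing Implicit Defensive.

Section Aux.
Import GRing.Theory.
Local Open Scope ring_scope.
Section S.
Variable F : finFieldType.

Lemma card_roots_le (d : nat) (c : F) : (0 < d)%N -> (#|[set x : F | x ^+ d == c]| <= d)%N.
Proof.
move=> d0.
have pn0 : ('X^d - c%:P : {poly F}) != 0.
  by rewrite -size_poly_eq0 size_XnsubC.
have := max_poly_roots pn0 (rs := enum [set x : F | x ^+ d == c]).
rewrite size_XnsubC // ltnS cardE; apply.
  by apply/allP => x; rewrite mem_enum inE rootE !hornerE subr_eq0.
exact: enum_uniq.
Qed.

Lemma expf_card1 (x : F) : x != 0 -> x ^+ (#|F|.-1) = 1.
Proof.
move=> x0; apply: (mulIf x0); rewrite mul1r -exprSr prednK ?expf_card //.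
exact: (leq_trans _ (finNzRing_gt1 F)).
Qed.

Lemma fiber_card (d e : nat) : (0 < d)%N -> (0 < e)%N -> (d * e = #|F|.-1)%N ->
  #|[set c : F | c ^+ e == 1]| = e /\
  forall c : F, c ^+ e == 1 -> #|[set x : F | x ^+ d == c]| = d.
Proof.
move=> d0 e0 de.
set S := [set c : F | c ^+ e == 1].
have part : (#|F|.-1 = \sum_(c in S) #|[set x : F | x ^+ d == c]|)%N.
  rewrite -(cardC1 (0 : F)) -sum1_card.
  rewrite (partition_big (fun x : F => x ^+ d) (mem S)); last first.
    move=> x; rewrite !inE => x0; rewrite -exprM de expf_card1 //.
  apply: eq_bigr => c; rewrite inE => ce.
  rewrite sum1_card; apply: eq_card => x; rewrite unfold_in /= !inE.
  case: (eqVneq x 0) => [->|//]; rewrite expr0n (gtn_eqF d0) /=.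
  apply/esym/negbTE; apply: contraTneq ce => <-; rewrite inE expr0n (gtn_eqF e0) eq_sym oner_eq0.
  done.
have le1 : forall c, (#|[set x : F | x ^+ d == c]| <= d)%N by move=> c; apply: card_roots_le.
have leS : (#|S| <= e)%N.
  apply: (@leq_trans #|[set x : F | x ^+ e == 1]|) => //; exact: card_roots_le.
have sumle : (\sum_(c in S) #|[set x : F | x ^+ d == c]| <= #|S| * d)%N.
  by rewrite -sum_nat_const; apply: leq_sum => c _.
have eqS : #|S| = e.
  apply/eqP; rewrite eqn_leq leS /= -(leq_pmul2r d0) mulnC de part; exact: sumle.
split => // c ce.
have cS : c \in S by rewrite inE.
apply/eqP; rewrite eqn_leq le1 /= leqNgt; apply/negP => lt.
have : (\sum_(c in S) #|[set x : F | x ^+ d == c]| < \sum_(c in S) d)%N.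
  rewrite (bigD1 c) //= [X in (_ < X)%N](bigD1 c) //= -addSn.
  by apply: leq_add => //; apply: leq_sum.
by rewrite sum_nat_const eqS -part -de mulnC ltnn.
Qed.
End S.
Section K.
Variables (F : finFieldType) (p k : nat).
Hypothesis chF : p \in [pchar F].
Hypothesis k0 : (0 < k)%N.
Hypothesis oddp : odd p.
Hypothesis three0 : (3%:R : F) != 0.
Local Notation Q := (p ^ k)%N.

Lemma Q_gt1 : (1 < Q)%N.
Proof. by rewrite -(expn0 p) ltn_exp2l // prime_gt1 // (pcharf_prime chF). Qed.

Lemma QE : Q = (Q - 1).+1.
Proof. by rewrite subn1 prednK // ltnW // Q_gt1. Qed.

Lemma oddQ1 : odd (Q - 1) = false.
Proof. by have := oddX p k; rewrite oddp orbT {1}QE /= => /negbTE. Qed.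

Lemma frobD (x y : F) : (x + y) ^+ Q = x ^+ Q + y ^+ Q.
Proof.
apply: exprDn_pchar; rewrite (eq_pnat _ (pcharf_eq chF)) pnatX pnat_id //.
exact: pcharf_prime chF.
Qed.

Lemma frobB (x y : F) : (x - y) ^+ Q = x ^+ Q - y ^+ Q.
Proof. by rewrite -{2}(subrK y x) (frobD (x - y) y) addrK. Qed.

Lemma frobn (j : nat) : (j%:R : F) ^+ Q = j%:R.
Proof. elim: j => [|j IH]; first by rewrite expr0n (gtn_eqF (ltnW Q_gt1)). by rewrite -nat1r frobD IH expr1n. Qed.

Lemma fromK1 (x : F) : x ^+ (Q - 1) = 1 -> x ^+ Q = x.
Proof. by rewrite {2}QE exprSr => ->; rewrite mul1r. Qed.

Lemma toK1 (x : F) : x != 0 -> x ^+ Q = x -> x ^+ (Q - 1) = 1.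
Proof. move=> x0; rewrite {1}QE exprSr -{3}(mul1r x); exact: mulIf.
Qed.

Lemma key (s : F) :
  (s ^+ (3 * (Q - 1)) == 1) && ((1 - s) ^+ (3 * (Q - 1)) == 1) =
  ((s ^+ (Q - 1) == 1) && (s != 1)) || (s ^+ 2 - s + 1 == 0).
Proof.
have m0 : (0 < 3 * (Q - 1))%N by rewrite muln_gt0 subn_gt0 Q_gt1.
apply/idP/idP.
  case/andP => /eqP hs /eqP h1s.
  have s0 : s != 0 by apply: contra_eq_neq hs => ->; rewrite expr0n (gtn_eqF m0) eq_sym oner_eq0.
  have s1 : s != 1 by apply: contra_eq_neq h1s => ->; rewrite subrr expr0n (gtn_eqF m0) eq_sym oner_eq0.
  set c := s ^+ 3; set d := (1 - s) ^+ 3.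
  have cK : c ^+ Q = c by apply: fromK1; rewrite -exprM.
  have dK : d ^+ Q = d by apply: fromK1; rewrite -exprM.
  set e := s ^+ 2 - s.
  have eE : e = (d - 1 + c) / 3.
    apply: (mulIf three0); rewrite mulfVK // /e /d /c; ring.
  have eK : e ^+ Q = e by rewrite eE exprMn exprVn frobD frobB cK dK expr1n frobn.
  have sE : (1 + e) * s = c - e by rewrite /e /c; ring.
  have [e1|e1] := eqVneq (1 + e) 0.
    by rewrite orbC -e1 /e; apply/orP; left; apply/eqP; ring.
  apply/orP; left; rewrite s1 andbT; apply/eqP; apply: toK1 => //.
  have -> : s = (c - e) / (1 + e) by rewrite -sE [(1 + e) * s]mulrC mulfK.
  by rewrite exprMn exprVn (frobB c e) (frobD 1 e) cK eK expr1n.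
case/orP.
  case/andP => /eqP hs s1; apply/andP; split.
    by rewrite mulnC exprM hs expr1n.
  have s10 : 1 - s != 0 by rewrite subr_eq0 eq_sym.
  rewrite mulnC exprM toK1 ?expr1n // frobB expr1n fromK1 //.
move=> /eqP h.
have s3 : s ^+ 3 = -1.
  apply/eqP; rewrite -subr_eq0 opprK.
  have -> : s ^+ 3 + 1 = (s + 1) * (s ^+ 2 - s + 1) by ring.
  by rewrite h mulr0.
have s13 : (1 - s) ^+ 3 = -1.
  apply/eqP; rewrite -subr_eq0 opprK.
  have -> : (1 - s) ^+ 3 + 1 = (2 - s) * (s ^+ 2 - s + 1) by ring.
  by rewrite h mulr0.
by rewrite !exprM s3 s13 -signr_odd oddQ1 expr0 eqxx.
Qed.


Hypothesis Q3 : (Q %% 3 != 0)%N.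
Variable n : nat.
Hypothesis n0 : (0 < n)%N.
Hypothesis hcard : (n * (3 * (Q - 1)) = #|F|.-1)%N.

Lemma s3_of_root (s : F) : s ^+ 2 - s + 1 = 0 -> s ^+ 3 = -1.
Proof.
move=> h; apply/eqP; rewrite -subr_eq0 opprK.
have -> : s ^+ 3 + 1 = (s + 1) * (s ^+ 2 - s + 1) by ring.
by rewrite h mulr0.
Qed.

Lemma countS :
  #|[set s : F | (s ^+ (3 * (Q - 1)) == 1) && ((1 - s) ^+ (3 * (Q - 1)) == 1)]| =
  if (Q %% 3 == 1)%N then (Q - 2)%N else Q.
Proof.
have Q1 := Q_gt1.
have [|||hB _] := @fiber_card F (3 * n) (Q - 1).
- lia.
- lia.
- by rewrite -hcard; lia.
set B := [set s : F | s ^+ (Q - 1) == 1].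
set A := [set s : F | (s ^+ (Q - 1) == 1) && (s != 1)].
have AB : A = B :\ 1 by apply/setP => s; rewrite !inE andbC.
have cA : #|A| = (Q - 2)%N.
  have := cardsD1 1 B; rewrite -AB hB inE expr1n eqxx /=.
move=> h; apply: (@addnI 1); rewrite -h; lia.
set R := [set s : F | s ^+ 2 - s + 1 == 0].
have SE : [set s : F | (s ^+ (3 * (Q - 1)) == 1) && ((1 - s) ^+ (3 * (Q - 1)) == 1)] = A :|: R.
  by apply/setP => s; rewrite !inE key.
rewrite SE.
have root1 : (1 : F) ^+ 2 - 1 + 1 != 0 by rewrite expr1n subrr add0r oner_eq0.
case: ifP => Qm.
  have [j hj] : exists j, (Q - 1 = 3 * j)%N by exists ((Q - 1) %/ 3)%N; lia.
  have RA : R \subset A.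
    apply/subsetP => s; rewrite !inE => /eqP h.
    apply/andP; split; last by apply/eqP => s1; move: h; rewrite s1 => /eqP; rewrite (negbTE root1).
    rewrite hj exprM (s3_of_root h) -signr_odd.
    have := oddQ1; rewrite hj oddM /= => ->; by rewrite expr0.
  by rewrite (setUidPl RA).
have [j hj] : exists j, (Q - 1 = 3 * j + 1)%N.
  exists ((Q - 1) %/ 3)%N; move/negbT: Qm; move: Q3 Q1; lia.
have AR : A :&: R = set0.
  apply/setP => s; rewrite !inE; apply/negP => /andP [/andP [/eqP hs _] /eqP h].
  move: hs; rewrite hj exprD exprM (s3_of_root h) expr1 -signr_odd.
  case: (odd j) => /=; last by rewrite expr0 mul1r => s1; move: h; rewrite s1 => /eqP; rewrite (negbTE root1).
  rewrite expr1 mulN1r => /eqP; rewrite eqr_oppLR => /eqP s1.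
  have : (3 : F) = s ^+ 2 - s + 1 by rewrite s1; ring.
  by rewrite h; apply/eqP.
have [|||hC _] := @fiber_card F (n * (Q - 1)) 3.
- lia.
- done.
- by rewrite -hcard; lia.
set C := [set x : F | x ^+ 3 == 1].
have : (0 < #|C :\ 1%R|)%N.
  have := cardsD1 1 C; rewrite hC inE expr1n eqxx /=.
  by case: #|C :\ 1%R|.
case/card_gt0P => x; rewrite !inE => /andP [x1 /eqP x3].
set s0 := - x.
have r0 : s0 ^+ 2 - s0 + 1 = 0.
  have : (x - 1) * (s0 ^+ 2 - s0 + 1) = 0.
    have -> : (x - 1) * (s0 ^+ 2 - s0 + 1) = x ^+ 3 - 1 by rewrite /s0; ring.
    by rewrite x3 subrr.
  by move/eqP; rewrite mulf_eq0 subr_eq0 (negbTE x1) /= => /eqP.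
have RE : R = [set s0; 1 - s0].
  apply/setP => s; rewrite !inE; apply/idP/idP.
    move=> /eqP h.
    have : (s - s0) * (s - (1 - s0)) = 0.
      have -> : (s - s0) * (s - (1 - s0)) = (s ^+ 2 - s + 1) - (s0 ^+ 2 - s0 + 1) by ring.
      by rewrite h r0 subrr.
    by move/eqP; rewrite mulf_eq0 !subr_eq0.
  case/orP => /eqP ->; rewrite ?r0 //.
  have -> : (1 - s0) ^+ 2 - (1 - s0) + 1 = s0 ^+ 2 - s0 + 1 by ring.
  by rewrite r0.
have sne : s0 != 1 - s0.
  apply/eqP => e.
  have : (3 : F) = 4 * (s0 ^+ 2 - s0 + 1) - (s0 - (1 - s0)) ^+ 2 by ring.
  by rewrite r0 -e subrr expr0n /= mulr0 subrr; apply/eqP.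
rewrite cardsU AR cards0 subn0 RE cards2 sne cA.
by move: Q1; clear; lia.
Qed.

End K.
Lemma sumb_card (T : finType) (P : pred T) : (\sum_(z : T) (P z : nat) = #|[set z | P z]|)%N.
Proof. by rewrite -sum1_card [RHS]big_mkcond /=; apply: eq_bigr => z _; rewrite inE; case: (P z). Qed.

Section M.
Variables (F : finFieldType) (a b : F) (n m : nat).
Hypothesis n0 : (0 < n)%N.
Hypothesis m0 : (0 < m)%N.
Hypothesis nm : (n * m = #|F|.-1)%N.
Hypothesis fib : forall c : F, c ^+ m == 1 -> #|[set x : F | x ^+ n == c]| = n.
Hypothesis expf1 : forall x : F, x != 0 -> x ^+ #|F|.-1 = 1.
Hypothesis am : a ^+ m = 1.
Hypothesis bm : b ^+ m = 1.
Hypothesis Nm : (-1 : F) ^+ m = 1.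
Hypothesis a0 : a != 0.
Hypothesis b0 : b != 0.

Lemma phiE (c : F) : #|[set z : F | z ^+ n == c]| = ((c == 0%R) + n * (c ^+ m == 1%R))%N.
Proof.
have [->|c0] := eqVneq c 0.
  rewrite expr0n (gtn_eqF m0) eq_sym oner_eq0 muln0 addn0 /=.
  rewrite -(cards1 (0 : F)); apply: eq_card => z; rewrite !inE expf_eq0 n0 /=; done.
have [cm|cm] := eqVneq (c ^+ m) 1; first by rewrite fib ?cm // muln1.
rewrite muln0 /=; apply/eqP; rewrite cards_eq0; apply/eqP/setP => z; rewrite !inE.
apply/negP => /eqP zc; move: cm; rewrite -zc -exprM nm expf1 ?eqxx //.
by apply: contra_neq c0; rewrite -zc => ->; rewrite expr0n (gtn_eqF n0).
Qed.


Lemma Nq_sum : fermat_Nq a b n = (\sum_(x : F) \sum_(y : F) \sum_(z : F)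
   (proj_normalized (x, y, z) && (a * x ^+ n + b * y ^+ n == z ^+ n)%R : nat))%N.
Proof.
rewrite /fermat_Nq -sumb_card.
pose G := fun (xy : F * F) (z : F) => (proj_normalized (xy, z) && (a * xy.1 ^+ n + b * xy.2 ^+ n == z ^+ n) : nat).
transitivity (\sum_(t : F * F * F) G t.1 t.2)%N; first by apply: eq_bigr; case.
rewrite -(pair_bigA _ G) /G /=.
pose H := fun (x y : F) => (\sum_(z : F) (proj_normalized (x, y, z) && (a * x ^+ n + b * y ^+ n == z ^+ n)%R : nat))%N.
transitivity (\sum_(t : F * F) H t.1 t.2)%N; first by apply: eq_bigr; case.
by rewrite -(pair_bigA _ H).
Qed.


Definition phi (c : F) := ((c == 0%R) + n * (c ^+ m == 1%R))%N.

Lemma X1 : (\sum_(y : F) \sum_(z : F)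
   (proj_normalized (1%R, y, z) && (a * 1 ^+ n + b * y ^+ n == z ^+ n)%R : nat))%N =
   (\sum_(w : F) phi (a + b * w)%R * phi w)%N.
Proof.
transitivity (\sum_(y : F) phi (a + b * y ^+ n)%R)%N.
  apply: eq_bigr => y _; rewrite /phi -phiE -sumb_card; apply: eq_bigr => z _.
  by rewrite /proj_normalized oner_eq0 /= eqxx expr1n mulr1 eq_sym.
rewrite (partition_big (fun y : F => (y ^+ n)%R) xpredT) //=.
apply: eq_bigr => w _.
rewrite (eq_bigr (fun _ => phi (a + b * w)%R)); last by move=> y /eqP ->.
rewrite sum_nat_const /phi -phiE mulnC; congr (_ * _)%N.
by rewrite -phiE; apply: eq_card => y; rewrite inE.
Qed.


Lemma X1b : (\sum_(w : F) phi (a + b * w)%R * phi w)%N =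
  (2 * n + n ^ 2 * #|[set s : F | (s ^+ m == 1%R) && ((1 - s) ^+ m == 1%R)%R]|)%N.
Proof.
pose k : F := - (a / b).
have k0 : k != 0 by rewrite /k oppr_eq0 mulf_neq0 // invr_eq0.
have km : k ^+ m = 1 by rewrite /k -mulN1r !exprMn Nm am exprVn bm invr1 !mul1r.
have kE : a + b * k = 0 by rewrite /k; field.
rewrite (eq_bigr (fun w => phi (a + b * w)%R * (w == 0%R) +
   (n * (((a + b * w)%R == 0%R) * (w ^+ m == 1%R)) +
    n * n * ((w ^+ m == 1%R) && ((a + b * w)%R ^+ m == 1%R)))))%N; last first.
  move=> w _; rewrite /phi -mulnb.
  move: (w == 0) (a + b * w == 0) (w ^+ m == 1) ((a + b * w) ^+ m == 1) => [] [] [] []; lia.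
rewrite big_split /= big_split /= -!big_distrr /=.
have T1 : (\sum_(w : F) phi (a + b * w)%R * (w == 0%R))%N = n.
  rewrite (bigD1 0) //= big1 ?addn0; last by move=> w /negbTE ->; rewrite muln0.
  by rewrite eqxx muln1 mulr0 addr0 /phi (negbTE a0) am eqxx muln1.
have T2 : (\sum_(w : F) (((a + b * w)%R == 0%R) * (w ^+ m == 1%R)))%N = 1%N.
  rewrite (bigD1 k) //= big1 ?addn0; last first.
    move=> w wk; case: eqP => // h; exfalso; move/eqP: wk; apply.
    by apply: (mulfI b0); rewrite -[b * w](addKr a) h -kE addKr.
  by rewrite kE km !eqxx.
have T3 : (\sum_(w : F) ((w ^+ m == 1%R) && ((a + b * w)%R ^+ m == 1%R) : nat))%N =
   #|[set s : F | (s ^+ m == 1) && ((1 - s) ^+ m == 1)]|.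
  rewrite (reindex_inj (mulfI k0)) /= -sumb_card; apply: eq_bigr => s _.
  have -> : a + b * (k * s) = a * (1 - s).
    by rewrite mulrA mulrBr mulr1 -[b * k](addKr a) kE addr0 mulNr.
  by rewrite !exprMn km am !mul1r.
rewrite T1 T2 T3.
by rewrite muln1 addnA addnn -mul2n; congr (_ + _)%N; rewrite expnS expn1.
Qed.


Lemma NqE : fermat_Nq a b n =
  (3 * n + n ^ 2 * #|[set s : F | (s ^+ m == 1%R) && ((1 - s) ^+ m == 1%R)%R]|)%N.
Proof.
have z0 : (0 : F) ^+ n = 0 by rewrite expr0n (gtn_eqF n0).
rewrite Nq_sum (bigD1 0) //= [X in (_ + X)%N](bigD1 1) /=; last by rewrite oner_eq0.
rewrite [X in (_ + (_ + X))%N]big1 ?addn0; last first.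
  move=> x /andP [x0 x1]; apply: big1 => y _; apply: big1 => z _.
  by rewrite /proj_normalized x0 (negbTE x1).
rewrite X1 X1b.
have X0 : (\sum_(y : F) \sum_(z : F)
   (proj_normalized (0%R, y, z) && (a * 0 ^+ n + b * y ^+ n == z ^+ n)%R : nat))%N = n.
  rewrite (bigD1 1) //= [X in (_ + X)%N](bigD1 0) /=; last by rewrite eq_sym oner_eq0.
  rewrite [X in (_ + (_ + X))%N]big1 ?addn0; last first.
    move=> y /andP [y1 y0]; apply: big1 => z _.
    by rewrite /proj_normalized eqxx /= y0 (negbTE y1).
  rewrite [X in (_ + X)%N]big1 ?addn0; last first.
    move=> z _; rewrite /proj_normalized eqxx /=.
    case: eqP => //= ->.
    by rewrite z0 expr1n !mulr0 add0r eq_sym oner_eq0.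
  transitivity #|[set z : F | z ^+ n == b]|.
    rewrite -sumb_card; apply: eq_bigr => z _.
    rewrite /proj_normalized eqxx oner_eq0 /=.
    by rewrite eqxx z0 mulr0 add0r expr1n mulr1 eq_sym.
  by rewrite phiE (negbTE b0) bm eqxx muln1.
rewrite X0.
by rewrite addnA -mulSn.
Qed.

End M.
End Aux.
Import GRing.Theory.
Theorem theorem5p2 (p h r n : nat) (F : finFieldType) (a b : F) :
  prime p -> 11 < p -> #|F| = p ^ h ->
  a != 0%R -> b != 0%R -> 3 < n ->
  0 < r -> (n * (3 * (p ^ r - 1)) = p ^ h - 1)%N ->
  in_subfield p r (a ^+ 3)%R -> in_subfield p r (b ^+ 3)%R ->
  fermat_Nq a b n =
    (if p ^ r %% 3 == 1 then 3 * n + n ^ 2 * (p ^ r - 2)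
     else 3 * n + n ^ 2 * p ^ r)%N.
Proof.
move=> pr p11 cardF a0 b0 n3 r0 hn ha hb.
have chF : p \in [pchar F]%R := card_finPcharP cardF pr.
have oddp : odd p by case: (even_prime pr) p11 => // ->.
have three0 : (3%:R : F)%R != 0%R.
  rewrite -(dvdn_pcharf chF); apply/negP => /(dvdn_leq (isT : 0 < 3)); lia.
have Q3 : p ^ r %% 3 != 0.
  apply/negP; rewrite -/(dvdn 3 (p ^ r)) Euclid_dvdX // r0 andbT dvdn_prime2 //.
  by move/eqP => p3; rewrite -p3 in p11.
have n0 : 0 < n by lia.
have hcard : n * (3 * (p ^ r - 1)) = #|F|.-1 by rewrite hn cardF subn1.
have Q1 := Q_gt1 chF r0.
set m := 3 * (p ^ r - 1).
have m0 : 0 < m by rewrite /m; lia.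
have [_ fib] := @fiber_card F n m n0 m0 hcard.
have subm (x : F) : x != 0%R -> in_subfield p r (x ^+ 3)%R -> (x ^+ m = 1)%R.
  move=> x0 /eqP hx; rewrite /m exprM.
  apply: (toK1 chF r0) => //; exact: expf_neq0.
have am := subm a a0 ha.
have bm := subm b b0 hb.
have Nm : ((-1 : F) ^+ m = 1)%R.
  by rewrite -signr_odd /m oddM (oddQ1 chF r0 oddp) andbF expr0.
rewrite (NqE n0 m0 hcard fib (@expf_card1 F) am bm Nm a0 b0).
rewrite (countS chF r0 oddp three0 Q3 n0 hcard).
by case: ifP.
Qed.
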